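(* Let $\alpha>0$, $h>0$, $D_x>0$, $D_y>0$ and $C>0$. Let $x_m\sim\mathrm{Unif}[0,D_x]$ and $y_m\sim\mathrm{Unif}[-D_y/2,D_y/2]$ be independent. Place the pinching antenna at $x_p=x_m$, so that the received SNR is $\gamma_r=\frac{\eta P_t e^{-\alpha x_m}}{\sigma^2(y_m^2+h^2)}$. Let $P_{out}=\Pr(\gamma_r\le\gamma_{\mathrm{thr}})$. Then $P_{out}$ is given by the following case distinction. (i) If $h^2\ge C$: $P_{out}=1$. (ii) If $h^2\le C$, $h^2\ge C-\frac{D_y^2}{4}$ and $h^2\ge Ce^{-\alpha D_x}$: $P_{out}=1+\frac{4}{\alpha D_xD_y}\left(h\tan^{-1}\!\left(\frac{\sqrt{C-h^2}}{h}\right)-\sqrt{C-h^2}\right)$. (iii) If $h^2\le C-\frac{D_y^2}{4}$ and $h^2\ge Ce^{-\alpha D_x}$: $P_{out}=1+\frac{\ln\left(\frac{h^2}{C}+\frac{D_y^2}{4C}\right)-2}{\alpha D_x}+\frac{4h\tan^{-1}\left(\frac{D_y}{2h}\right)}{\alpha D_xD_y}$. (iv) If $h^2\ge C-\frac{D_y^2}{4}$ and $h^2\le Ce^{-\alpha D_x}$: $P_{out}=1+\frac{4}{\alpha D_xD_y}\Big(\sqrt{Ce^{-\alpha D_x}-h^2}-h\tan^{-1}\!\big(\tfrac{\sqrt{Ce^{-\alpha D_x}-h^2}}{h}\big)-\sqrt{C-h^2}+h\tan^{-1}\!\big(\tfrac{\sqrt{C-h^2}}{h}\big)\Big)$. (v)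 If $h^2\le C-\frac{D_y^2}{4}$, $h^2\le Ce^{-\alpha D_x}$ and $h^2\ge Ce^{-\alpha D_x}-\frac{D_y^2}{4}$: $P_{out}=1+\frac{4}{\alpha D_xD_y}\Big(\sqrt{Ce^{-\alpha D_x}-h^2}-h\tan^{-1}\!\big(\tfrac{\sqrt{Ce^{-\alpha D_x}-h^2}}{h}\big)-\frac{D_y}{2}+h\tan^{-1}\!\big(\tfrac{D_y}{2h}\big)\Big)+\frac{\ln\left(\frac{h^2}{C}+\frac{D_y^2}{4C}\right)}{\alpha D_x}$. (vi) If $h^2\le Ce^{-\alpha D_x}-\frac{D_y^2}{4}$: $P_{out}=0$.
   Context: Pinching-antenna system: a dielectric waveguide lies parallel to the $x$-axis at height $h$, fed at $(0,0,h)$, spanning $x\in[0,D_x]$. A single pinching antenna is at $(x_p,0,h)$, $x_p\in[0,D_x]$; a single-antenna user is at $(x_m,y_m,0)$. The waveguide has absorption coefficient $\alpha$ (power attenuates as $e^{-\alpha x_p}$). The received SNR is $\gamma_r=\frac{\eta P_t e^{-\alpha x_p}}{\sigma^2\left((x_m-x_p)^2+y_m^2+h^2\right)}$, where $\eta=\lambda^2/(16\pi^2)>0$, $P_t>0$ is the transmit power, $\sigma^2>0$ the noise variance. $\gamma_{\mathrm{thr}}>0$ is the SNR threshold and $C=\frac{\eta P_t}{\gamma_{\mathrm{thr}}\sigma^2}$. *)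

(* Defs.v *)
From HB Require Import structures.
From mathcomp Require Import all_boot all_order all_algebra.
From mathcomp Require Import all_classical all_reals all_analysis.
Set Implicit Arguments. Unset Strict Implicit. Unset Printing Implicit Defensive.
Import Order.TTheory GRing.Theory Num.Theory.
Local Open Scope classical_set_scope.
Local Open Scope ring_scope.

(* Received SNR with the pinching antenna placed at x_p = x_m:
   gamma_r = eta Pt e^{-alpha x_m} / (sigma2 ((x_m - x_p)^2 + y_m^2 + h^2)). *)
Definition snr_r {R : realType} (eta Pt sigma2 alpha h xm ym : R) : R :=
  eta * Pt * expR (- (alpha * xm)) /
    (sigma2 * ((xm - xm) ^+ 2 + ym ^+ 2 + h ^+ 2)).

(* Outage event, as a subset of the (x_m, y_m) sample space R x R,
   restricted to the support [0,Dx] x [-Dy/2, Dy/2] of the joint law. *)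
Definition outage_set {R : realType} (eta Pt sigma2 gthr alpha h Dx Dy : R)
  : set (R * R) :=
  [set z | (0 <= z.1 <= Dx) /\ (- (Dy / 2) <= z.2 <= Dy / 2) /\
           snr_r eta Pt sigma2 alpha h z.1 z.2 <= gthr].

(* P_out = Pr(gamma_r <= gthr) where x_m ~ Unif[0,Dx], y_m ~ Unif[-Dy/2,Dy/2]
   independent: the joint law is the product Lebesgue measure normalised by
   1/(Dx Dy) on the rectangle. *)
Definition Pout {R : realType} (eta Pt sigma2 gthr alpha h Dx Dy : R) : \bar R :=
  ((Dx * Dy)^-1)%:E *
  ((@lebesgue_measure R) \x (@lebesgue_measure R))
     (outage_set eta Pt sigma2 gthr alpha h Dx Dy).

(* Main.v *)
Require Import Defs.
From HB Require Import structures.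
From mathcomp Require Import all_boot all_order all_algebra.
From mathcomp Require Import all_classical all_reals all_analysis.
Import Order.TTheory GRing.Theory Num.Theory.
Local Open Scope ring_scope.
From mathcomp Require Import lra ring measurable_realfun.
Import numFieldNormedType.Exports.
Local Open Scope classical_set_scope.

Lemma is_derive_chain {R : realType} (f g : R -> R) (x df dg : R) :
  is_derive x 1 f df -> is_derive (f x) 1 g dg -> is_derive x 1 (g \o f) (dg * df).
Proof.
move=> Hf Hg; apply: DeriveDef.
  apply/derivable1_diffP; apply: differentiable_comp; apply/derivable1_diffP.
    exact: ex_derive.
  exact: ex_derive.
rewrite -derive1E derive1_comp; first by rewrite !derive1E !derive_val.
  exact: ex_derive.
exact: ex_derive.
Qed.

Lemma test {R : realType} (C alpha h x : R) :
  is_derive x 1 (fun x => C * expR (- (alpha * x)) - h ^+ 2) (C * (expR (- (alpha * x)) * (- alpha))).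
Proof.
have H1 : is_derive x 1 (fun x : R => - (alpha * x)) (- alpha).
  have := is_deriveN (is_deriveZ alpha (@is_derive_id _ _ x 1)).
  by rewrite /GRing.scale /= mulr1.
have H2 := is_derive_chain _ _ _ _ _ H1 (is_derive_expR _).
have H3 := is_deriveB (is_deriveZ C H2) (is_derive_cst (h ^+ 2) x 1).
rewrite subr0 in H3.
exact: H3.
Qed.

Lemma ftc_piece {R : realType} (f F : R -> R) (a c : R) : a <= c ->
  continuous f -> continuous F ->
  (forall x, a < x < c -> is_derive x 1 F (f x)) ->
  (\int[lebesgue_measure]_(x in `[a, c]) (f x)%:E = (F c - F a)%:E)%E.
Proof.
move=> + cf cF dF; rewrite le_eqVlt => /predU1P[<-|ac].
  by rewrite set_itv1 integral_set1 subrr.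
rewrite (@continuous_FTC2 _ f F) //.
- by apply: continuous_in_subspaceT => x _; exact: cf.
- split.
  + by move=> x; rewrite in_itv /= => /dF H; exact: ex_derive.
  + by apply: cvg_at_right_filter; exact: cF.
  + by apply: cvg_at_left_filter; exact: cF.
- by move=> x; rewrite in_itv /= => /dF H; rewrite derive1E derive_val.
Qed.

Lemma int_split {R : realType} (f : R -> R) (a c d : R) : a <= c -> c <= d ->
  continuous f -> (forall x, 0 <= f x) ->
  (\int[lebesgue_measure]_(x in `[a, d]) (f x)%:E =
   \int[lebesgue_measure]_(x in `[a, c]) (f x)%:E +
   \int[lebesgue_measure]_(x in `[c, d]) (f x)%:E)%E.
Proof.
move=> ac cd cf f0.
rewrite (@itv_bndbnd_setU _ _ (BLeft a) (BRight c) (BRight d)) //.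
rewrite ge0_integral_setU //.
- rewrite integral_itv_obnd_cbnd //.
  by apply: measurable_funS (_ : measurable_fun setT _) => //; apply/measurable_EFinP; exact: continuous_measurable_fun.
- by apply: measurable_funS (_ : measurable_fun setT _) => //; apply/measurable_EFinP; exact: continuous_measurable_fun.
- by move=> x _; rewrite lee_fin.
- rewrite disj_set2E; apply/eqP/seteqP; split => // x /=; rewrite !in_itv /=.
  move=> [/andP[_ x1] /andP[x2 _]]; lra.
Qed.

Definition uu {R : realType} (C alpha h : R) (x : R) : R :=
  Num.sqrt (C * expR (- (alpha * x)) - h ^+ 2).
Definition phi {R : realType} (h : R) (t : R) : R := t - h * atan (t / h).
Definition fint {R : realType} (C alpha h Dy : R) (x : R) : R :=
  2 * (Dy / 2) - 2 * Order.min (Dy / 2) (uu C alpha h x).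

Lemma kappa_derive {R : realType} (C alpha h x : R) :
  is_derive x 1 (fun x => C * expR (- (alpha * x)) - h ^+ 2)
    (C * (expR (- (alpha * x)) * (- alpha))).
Proof.
have H1 : is_derive x 1 (fun x : R => - (alpha * x)) (- alpha).
  have := is_deriveN (is_deriveZ alpha (@is_derive_id _ _ x 1)).
  by rewrite /GRing.scale /= mulr1.
have H2 := is_derive_chain _ _ _ _ _ H1 (is_derive_expR _).
have H3 := is_deriveB (is_deriveZ C H2) (is_derive_cst (h ^+ 2) x 1).
by rewrite subr0 in H3.
Qed.

Lemma uu_derive {R : realType} (C alpha h x : R) :
  0 < C * expR (- (alpha * x)) - h ^+ 2 ->
  is_derive x 1 (uu C alpha h)
    ((2 * uu C alpha h x)^-1 * (C * (expR (- (alpha * x)) * (- alpha)))).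
Proof.
move=> k0.
exact: (is_derive_chain _ _ _ _ _ (kappa_derive C alpha h x) (is_derive1_sqrt k0)).
Qed.

Lemma phi_derive {R : realType} (h t : R) :
  is_derive t 1 (phi h) (1 - h * ((1 + (t / h) ^+ 2)^-1 * h^-1)).
Proof.
have H1 : is_derive t 1 (fun t : R => t / h) (h^-1).
  have := is_deriveZ h^-1 (@is_derive_id _ _ t 1).
  rewrite /GRing.scale /= mulr1 => H.
  by rewrite (_ : (fun t => t / h) = (fun t => h^-1 * t)) //; apply/funext => y; rewrite mulrC.
have H2 := is_derive_chain _ _ _ _ _ H1 (is_derive1_atan _).
have H3 := is_deriveB (@is_derive_id _ _ t 1) (is_deriveZ h H2).
exact: H3.
Qed.

Lemma cont_of_derive {R : realType} (f : R -> R) (x df : R) :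
  is_derive x 1 f df -> {for x, continuous f}.
Proof. by move=> H; apply: differentiable_continuous; apply/derivable1_diffP; exact: ex_derive. Qed.

Lemma cont_uu {R : realType} (C alpha h : R) : continuous (uu C alpha h).
Proof.
move=> x; apply: (@continuous_comp _ _ _ (fun x => C * expR (- (alpha * x)) - h ^+ 2) Num.sqrt).
  exact: cont_of_derive (kappa_derive C alpha h x).
exact: sqrt_continuous.
Qed.

Lemma cont_phi {R : realType} (h : R) : continuous (phi h).
Proof. by move=> t; exact: cont_of_derive (phi_derive h t). Qed.

Lemma cont_fint {R : realType} (C alpha h Dy : R) : continuous (fint C alpha h Dy).
Proof.
move=> x; apply: (@continuous_comp _ _ _ (uu C alpha h)
   (fun t => 2 * (Dy / 2) - 2 * Order.min (Dy / 2) t)); first exact: cont_uu.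
apply: continuousB; first exact: cst_continuous.
apply: continuousM; first exact: cst_continuous.
by apply: min_fun_continuous; [exact: cst_continuous|by move=> ?].
Qed.

Lemma fint_ge0 {R : realType} (C alpha h Dy x : R) : 0 <= fint C alpha h Dy x.
Proof.
rewrite /fint subr_ge0 ler_pM2l // ge_min lexx //.
Qed.

Lemma int_main {R : realType} (C alpha h Dx Dy p q : R) :
  0 < C -> 0 < alpha -> 0 < h -> 0 < Dy ->
  0 <= p -> p <= q -> q <= Dx ->
  (forall x, 0 < x < p -> Dy / 2 <= uu C alpha h x) ->
  (forall x, p < x < q -> h ^+ 2 < C * expR (- (alpha * x)) /\ uu C alpha h x <= Dy / 2) ->
  (forall x, q < x < Dx -> uu C alpha h x = 0) ->
  (\int[lebesgue_measure]_(x in `[0%R, Dx]) (fint C alpha h Dy x)%:E =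
    (Dy * Dx - Dy * p + 4 / alpha * (phi h (uu C alpha h q) - phi h (uu C alpha h p)))%:E)%E.
Proof.
move=> C0 a0 h0 Dy0 p0 pq qD H1 H2 H3.
have f0 := fint_ge0 C alpha h Dy.
have cf := cont_fint C alpha h Dy.
rewrite (int_split _ 0 p Dx) //; last exact: le_trans qD.
rewrite (int_split _ p q Dx) //.
have D1 : forall x, 0 < x < p -> is_derive x 1 (fun _ : R => (0:R)) (fint C alpha h Dy x).
  move=> x /H1 ux; apply: is_derive_eq (is_derive_cst 0 x 1) _.
  by rewrite /fint min_l // subrr.
have D3 : forall x, q < x < Dx -> is_derive x 1 (fun x : R => Dy * x) (fint C alpha h Dy x).
  move=> x /H3 ux; apply: is_derive_eq (is_deriveZ Dy (@is_derive_id _ _ x 1)) _.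
  by rewrite /fint ux min_r ?divr_ge0 ?ltW // mulr0 subr0 /GRing.scale /= mulr1 mulrC mulfVK.
have c3 : continuous (fun x : R => Dy * x).
  by move=> x; apply: continuousM => //; exact: cst_continuous.
have c1 : continuous (fun _ : R => (0:R)) by move=> x; exact: cst_continuous.
rewrite (ftc_piece _ _ _ _ p0 cf c1 D1) (ftc_piece _ _ _ _ qD cf c3 D3).
set F2 := (fun x : R => Dy * x + 4 / alpha * phi h (uu C alpha h x)).
have c2 : continuous F2.
  move=> x; apply: continuousD.
    by apply: continuousM => //; exact: cst_continuous.
  apply: continuousM; first exact: cst_continuous.
  exact: continuous_comp (cont_uu C alpha h x) (cont_phi h _).
have D2 : forall x, p < x < q -> is_derive x 1 F2 (fint C alpha h Dy x).
  move=> x /H2 [k0 ub].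
  rewrite -subr_gt0 in k0.
  have := is_deriveD (is_deriveZ Dy (@is_derive_id _ _ x 1))
    (is_deriveZ (4 / alpha) (is_derive_chain _ _ _ _ _ (uu_derive _ _ _ _ k0) (phi_derive h _))).
  move=> H; apply: is_derive_eq H _.
  rewrite /fint min_r //.
  set u := uu C alpha h x.
  have u0 : 0 < u by rewrite /u /uu sqrtr_gt0.
  have hu : u ^+ 2 = C * expR (- (alpha * x)) - h ^+ 2 by rewrite /u /uu sqr_sqrtr // ltW.
  have hE : C * (expR (- (alpha * x)) * - alpha) = - alpha * (u ^+ 2 + h ^+ 2).
    by rewrite hu; ring.
  rewrite hE /GRing.scale /=.
  field.
  by rewrite (gt_eqF u0) (gt_eqF h0) (gt_eqF a0) gt_eqF // addr_gt0 // exprn_gt0.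
rewrite (ftc_piece _ _ _ _ pq cf c2 D2).
rewrite -!EFinD; congr EFin; rewrite /F2; ring.
Qed.


Lemma sec_meas {R : realType} (b K h : R) : 0 < b ->
  lebesgue_measure [set y : R | - b <= y <= b /\ K <= y ^+ 2 + h ^+ 2] =
  (2 * b - 2 * Order.min b (Num.sqrt (K - h ^+ 2)))%:E.
Proof.
move=> b0.
set u := Num.sqrt (K - h ^+ 2).
have key y : (K <= y ^+ 2 + h ^+ 2) = (u <= `|y|).
  by rewrite /u -sqrtr_sqr ler_sqrt ?sqr_ge0 // lerBlDr.
have u0 : 0 <= u := sqrtr_ge0 _.
have [bu|ub] := ltrP b u.
  rewrite (_ : [set _ | _] = set0) ?measure0; last first.
    apply/seteqP; split => // y /= [/andP[y1 y2]]; rewrite key.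
    move=> uy; have : `|y| <= b by rewrite ler_norml y1 y2.
    by move=> yb; have := lt_le_trans bu (le_trans uy yb); rewrite ltxx.
  by rewrite ?min_l ?ltW // subrr.
rewrite ?min_r //.
have [u00|up] := eqVneq u 0.
  rewrite (_ : [set _ | _] = `[- b, b]); last first.
    apply/seteqP; split => y /=; rewrite in_itv /= key u00.
      by case.
    by move=> ->; split.
  rewrite lebesgue_measure_itv /= lte_fin gtrN // u00 mulr0 subr0.
  by rewrite -EFinD opprK mulr2n mulrDl !mul1r.
have u0' : 0 < u by rewrite lt_neqAle eq_sym up u0.
rewrite (_ : [set _ | _] = `[- b, - u] `|` `[u, b]); last first.
  apply/seteqP; split => y /=; rewrite !in_itv /= key.
    move=> [/andP[y1 y2]]; rewrite ler_normr => /orP[uy|uy].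
      by right; rewrite uy y2.
    by left; rewrite y1 lerNr uy.
  move=> [/andP[y1 y2]|/andP[y1 y2]].
    split; first by apply/andP; split; lra.
    by rewrite ler_normr lerNr y2 orbT.
  split; first by apply/andP; split; lra.
  by rewrite ler_normr y1.
set A := `[- b, - u]; set B := `[u, b].
have -> : lebesgue_measure (A `|` B) =
    (lebesgue_measure A + lebesgue_measure B)%E.
  apply: measureU; [exact: measurable_itv|exact: measurable_itv|].
  apply/seteqP; split => // y; rewrite /A /B /= !in_itv /= => -[/andP[y1 y2] /andP[y3 y4]].
  lra.
rewrite /A /B !lebesgue_measure_itv /= !lte_fin ltrN2.
case: ifPn => H.
  by rewrite -!EFinD; congr EFin; lra.
have -> : u = b by apply/eqP; rewrite eq_le ub leNgt H.
by rewrite subrr adde0.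
Qed.

Lemma snr_equiv {R : realType} (eta Pt sigma2 gthr alpha h x y : R) :
  0 < sigma2 -> 0 < gthr -> 0 < h ->
  (snr_r eta Pt sigma2 alpha h x y <= gthr) =
  (eta * Pt / (gthr * sigma2) * expR (- (alpha * x)) <= y ^+ 2 + h ^+ 2).
Proof.
move=> s0 g0 h0.
have Q0 : 0 < y ^+ 2 + h ^+ 2 by rewrite ltr_wpDl ?sqr_ge0 // exprn_gt0.
rewrite /snr_r subrr expr0n add0r ler_pdivrMr ?mulr_gt0 //.
rewrite [in RHS]mulrAC [in RHS]ler_pdivrMr ?mulr_gt0 //.
by congr (_ <= _); ring.
Qed.

Lemma Pout_int {R : realType} (eta Pt sigma2 gthr alpha h Dx Dy : R) :
  0 < sigma2 -> 0 < gthr -> 0 < h -> 0 < Dy ->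
  Pout eta Pt sigma2 gthr alpha h Dx Dy = (((Dx * Dy)^-1)%:E *
   \int[lebesgue_measure]_(x in `[0%R, Dx])
     (fint (eta * Pt / (gthr * sigma2)) alpha h Dy x)%:E)%E.
Proof.
move=> s0 g0 h0 Dy0.
rewrite /Pout /product_measure1; congr (_ * _)%E.
rewrite [RHS]integral_mkcond; apply: eq_integral => x _ /=.
rewrite /patch; case: ifPn => xD.
  rewrite -sec_meas ?divr_gt0 //; congr (lebesgue_measure _).
  apply/seteqP; split => y /=; rewrite /xsection /outage_set /= inE /=.
    by move=> [_ [H1]]; rewrite snr_equiv.
  move=> [H1 H2]; split; last by split; rewrite // snr_equiv.
  by move: xD; rewrite inE /= in_itv.
rewrite (_ : xsection _ x = set0) ?measure0 //.
apply/seteqP; split => // y /=; rewrite /xsection /outage_set /= inE /=.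
by move=> [H _]; move/negP: xD; apply; apply: mem_set; rewrite /= in_itv /= H.
Qed.

Definition Kf {R : realType} (C alpha x : R) : R := C * expR (- (alpha * x)).

Lemma K_lt {R : realType} (C alpha x y : R) : 0 < C -> 0 < alpha -> x < y ->
  Kf C alpha y < Kf C alpha x.
Proof.
by move=> C0 a0 xy; rewrite /Kf ltr_pM2l // ltr_expR ltrN2 ltr_pM2l.
Qed.

Lemma K_le_inv {R : realType} (C alpha x y : R) : 0 < C -> 0 < alpha ->
  Kf C alpha y <= Kf C alpha x -> x <= y.
Proof.
move=> C0 a0 H; rewrite leNgt; apply/negP => /(K_lt _ _ _ _ C0 a0) H'.
by have := lt_le_trans H' H; rewrite ltxx.
Qed.

Lemma K_ln {R : realType} (C alpha t : R) : 0 < C -> 0 < alpha -> 0 < t ->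
  Kf C alpha (ln (C / t) / alpha) = t.
Proof.
move=> C0 a0 t0; rewrite /Kf.
have -> : alpha * (ln (C / t) / alpha) = ln (C / t) by rewrite mulrC divfK // gt_eqF.
rewrite expRN lnK ?posrE ?divr_gt0 //.
by rewrite invf_div mulrC divfK // gt_eqF.
Qed.

Lemma K0 {R : realType} (C alpha : R) : Kf C alpha 0 = C.
Proof. by rewrite /Kf mulr0 oppr0 expR0 mulr1. Qed.

Lemma uu_zero {R : realType} (C alpha h x : R) : Kf C alpha x <= h ^+ 2 ->
  uu C alpha h x = 0.
Proof. by move=> H; apply/eqP; rewrite /uu sqrtr_eq0 subr_le0. Qed.

Lemma uu_geb {R : realType} (C alpha h b x : R) : 0 <= b ->
  b ^+ 2 + h ^+ 2 <= Kf C alpha x -> b <= uu C alpha h x.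
Proof.
move=> b0 H; rewrite /uu -[X in X <= _](ger0_norm b0) -sqrtr_sqr ler_sqrt.
  by rewrite lerBrDr.
by rewrite subr_ge0 (le_trans _ H) // lerDr sqr_ge0.
Qed.

Lemma uu_leb {R : realType} (C alpha h b x : R) : 0 <= b ->
  Kf C alpha x <= b ^+ 2 + h ^+ 2 -> uu C alpha h x <= b.
Proof.
move=> b0 H; rewrite /uu -[X in _ <= X](ger0_norm b0) -sqrtr_sqr ler_sqrt ?sqr_ge0 //.
by rewrite lerBlDr.
Qed.

Lemma uu_val {R : realType} (C alpha h b x : R) : 0 <= b ->
  Kf C alpha x = b ^+ 2 + h ^+ 2 -> uu C alpha h x = b.
Proof. by move=> b0 H; rewrite /uu -/(Kf _ _ _) H addrK sqrtr_sqr ger0_norm. Qed.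

Lemma phi0 {R : realType} (h : R) : phi h 0 = 0.
Proof. by rewrite /phi mul0r atan0 mulr0 subr0. Qed.

Theorem proposition1 (R : realType) (eta Pt sigma2 gthr alpha h Dx Dy : R) :
  0 < eta -> 0 < Pt -> 0 < sigma2 -> 0 < gthr ->
  0 < alpha -> 0 < h -> 0 < Dx -> 0 < Dy ->
  let C := eta * Pt / (gthr * sigma2) in
  let P := Pout eta Pt sigma2 gthr alpha h Dx Dy in
  let E := C * expR (- (alpha * Dx)) in
  (* (i) *)
  (C <= h ^+ 2 -> P = 1%E) /\
  (* (ii) *)
  (h ^+ 2 <= C -> C - Dy ^+ 2 / 4 <= h ^+ 2 -> E <= h ^+ 2 ->
     P = (1 + 4 / (alpha * Dx * Dy) *
            (h * atan (Num.sqrt (C - h ^+ 2) / h) - Num.sqrt (C - h ^+ 2)))%:E) /\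
  (* (iii) *)
  (h ^+ 2 <= C - Dy ^+ 2 / 4 -> E <= h ^+ 2 ->
     P = (1 + (ln (h ^+ 2 / C + Dy ^+ 2 / (4 * C)) - 2) / (alpha * Dx)
            + 4 * h * atan (Dy / (2 * h)) / (alpha * Dx * Dy))%:E) /\
  (* (iv) *)
  (C - Dy ^+ 2 / 4 <= h ^+ 2 -> h ^+ 2 <= E ->
     P = (1 + 4 / (alpha * Dx * Dy) *
            (Num.sqrt (E - h ^+ 2) - h * atan (Num.sqrt (E - h ^+ 2) / h)
             - Num.sqrt (C - h ^+ 2) + h * atan (Num.sqrt (C - h ^+ 2) / h)))%:E) /\
  (* (v) *)
  (h ^+ 2 <= C - Dy ^+ 2 / 4 -> h ^+ 2 <= E -> E - Dy ^+ 2 / 4 <= h ^+ 2 ->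
     P = (1 + 4 / (alpha * Dx * Dy) *
            (Num.sqrt (E - h ^+ 2) - h * atan (Num.sqrt (E - h ^+ 2) / h)
             - Dy / 2 + h * atan (Dy / (2 * h)))
          + ln (h ^+ 2 / C + Dy ^+ 2 / (4 * C)) / (alpha * Dx))%:E) /\
  (* (vi) *)
  (h ^+ 2 <= E - Dy ^+ 2 / 4 -> P = 0%E).
Proof.
move=> eta0 Pt0 s0 g0 a0 h0 Dx0 Dy0 C P E.
have C0 : 0 < C by rewrite /C divr_gt0 ?mulr_gt0.
set b := Dy / 2.
have b0 : 0 < b by rewrite /b divr_gt0.
have hb : b ^+ 2 = Dy ^+ 2 / 4 by rewrite /b; field.
have EK : E = Kf C alpha Dx by [].
have K0' : Kf C alpha 0 = C := K0 C alpha.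
have Klt := fun x y => @K_lt R C alpha x y C0 a0.
have Kinv := fun x y => @K_le_inv R C alpha x y C0 a0.
have h20 : 0 < h ^+ 2 by rewrite exprn_gt0.
have bh0 : 0 < b ^+ 2 + h ^+ 2 by rewrite addr_gt0 // exprn_gt0.
set x1 := ln (C / (b ^+ 2 + h ^+ 2)) / alpha.
set x2 := ln (C / h ^+ 2) / alpha.
have Kx1 : Kf C alpha x1 = b ^+ 2 + h ^+ 2 by rewrite /x1 K_ln.
have Kx2 : Kf C alpha x2 = h ^+ 2 by rewrite /x2 K_ln.
have u0 : uu C alpha h 0 = Num.sqrt (C - h ^+ 2).
  by rewrite /uu mulr0 oppr0 expR0 mulr1.
have uDx : uu C alpha h Dx = Num.sqrt (E - h ^+ 2) by [].
have ux1 : uu C alpha h x1 = b by apply: uu_val; rewrite ?ltW.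
have ux2 : uu C alpha h x2 = 0 by apply: uu_zero; rewrite Kx2.
have main : forall p q, 0 <= p -> p <= q -> q <= Dx ->
  (forall x, 0 < x < p -> Dy / 2 <= uu C alpha h x) ->
  (forall x, p < x < q -> h ^+ 2 < C * expR (- (alpha * x)) /\ uu C alpha h x <= Dy / 2) ->
  (forall x, q < x < Dx -> uu C alpha h x = 0) ->
  P = ((Dx * Dy)^-1 * (Dy * Dx - Dy * p + 4 / alpha *
        (phi h (uu C alpha h q) - phi h (uu C alpha h p))))%:E.
  move=> p q p0 pq qD H1 H2 H3.
  by rewrite /P Pout_int // -/C (int_main _ _ _ _ _ _ _ C0 a0 h0 Dy0 p0 pq qD H1 H2 H3) EFinM.
have void : forall p x : R, p < x < p -> False.
  by move=> p x /andP[l r]; have := lt_trans l r; rewrite ltxx.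
have Dyn0 : Dy != 0 by rewrite gt_eqF.
have Dxn0 : Dx != 0 by rewrite gt_eqF.
have an0 : alpha != 0 by rewrite gt_eqF.
have hn0 : h != 0 by rewrite gt_eqF.
have Cn0 : C != 0 by rewrite gt_eqF.
have lnid : ln (h ^+ 2 / C + Dy ^+ 2 / (4 * C)) = - ln (C / (b ^+ 2 + h ^+ 2)).
  have -> : h ^+ 2 / C + Dy ^+ 2 / (4 * C) = (b ^+ 2 + h ^+ 2) / C by rewrite hb; field.
  by rewrite -invf_div lnV // posrE divr_gt0.
have atid : Dy / (2 * h) = b / h by rewrite /b; field.
split.
  move=> Hc; rewrite (main 0 0) ?lexx ?ltW //.
  - by rewrite subrr !mulr0 subr0 addr0 (mulrC Dy) mulVf // mulf_neq0.
  - by move=> x /void.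
  - by move=> x /void.
  - move=> x /andP[x0 _]; apply: uu_zero.
    by apply: le_trans (ltW (Klt _ _ x0)) _; rewrite K0'.
split.
  move=> Hc1 Hc2 Hc3; rewrite (main 0 x2) ?lexx //.
  - congr EFin; rewrite ux2 u0 phi0 /phi; field; by rewrite Dyn0 Dxn0 an0.
  - by apply: Kinv; rewrite Kx2 K0'.
  - by apply: Kinv; rewrite Kx2 -EK.
  - by move=> x /void.
  - move=> x /andP[x0 xx2]; split.
      by rewrite -Kx2; apply: Klt.
    apply: uu_leb; first exact: ltW.
    apply: le_trans (ltW (Klt _ _ x0)) _; rewrite K0' hb; lra.
  - move=> x /andP[xx2 _]; apply: uu_zero; rewrite -Kx2; apply: ltW; exact: Klt.
split.
  move=> Hc1 Hc2; rewrite (main x1 x2).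
  - congr EFin; rewrite ux2 ux1 phi0 /phi lnid atid /x1 /b; field; by rewrite ?Dyn0 ?Dxn0 ?an0 ?hn0 ?Cn0.
  - by apply: Kinv; rewrite Kx1 K0' hb; lra.
  - by apply: Kinv; rewrite Kx1 Kx2 lerDr sqr_ge0.
  - by apply: Kinv; rewrite Kx2 -EK.
  - move=> x /andP[_ xx1]; apply: uu_geb; first exact: ltW.
    by rewrite -Kx1; apply: ltW; exact: Klt.
  - move=> x /andP[x1x xx2]; split.
      by rewrite -Kx2; apply: Klt.
    apply: uu_leb; first exact: ltW.
    by rewrite -Kx1; apply: ltW; exact: Klt.
  - move=> x /andP[xx2 _]; apply: uu_zero; rewrite -Kx2; apply: ltW; exact: Klt.
split.
  move=> Hc1 Hc2; rewrite (main 0 Dx) ?lexx ?ltW //.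
  - congr EFin; rewrite uDx u0 /phi; field; by rewrite ?Dyn0 ?Dxn0 ?an0 ?hn0 ?Cn0.
  - by move=> x /void.
  - move=> x /andP[x0 xD]; split.
      by apply: le_lt_trans Hc2 _; rewrite EK; apply: Klt.
    apply: uu_leb; first exact: ltW.
    apply: le_trans (ltW (Klt _ _ x0)) _; rewrite K0' hb; lra.
  - by move=> x /void.
split.
  move=> Hc1 Hc2 Hc3; rewrite (main x1 Dx) ?lexx //.
  - congr EFin; rewrite uDx ux1 /phi lnid atid /x1 /b; field; by rewrite ?Dyn0 ?Dxn0 ?an0 ?hn0 ?Cn0.
  - by apply: Kinv; rewrite Kx1 K0' hb; lra.
  - by apply: Kinv; rewrite Kx1 -EK hb; lra.
  - move=> x /andP[_ xx1]; apply: uu_geb; first exact: ltW.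
    by rewrite -Kx1; apply: ltW; exact: Klt.
  - move=> x /andP[x1x xD]; split.
      by apply: le_lt_trans Hc2 _; rewrite EK; apply: Klt.
    apply: uu_leb; first exact: ltW.
    by rewrite -Kx1; apply: ltW; exact: Klt.
  - by move=> x /void.
move=> Hc; rewrite (main Dx Dx) ?lexx ?ltW //.
- by congr EFin; rewrite !subrr mulr0 addr0 mulr0.
- move=> x /andP[x0 xD]; apply: uu_geb; first exact: ltW.
  apply: le_trans (ltW (Klt _ _ xD)); rewrite -EK hb; lra.
- by move=> x /void.
- by move=> x /void.
Qed.
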